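(* Let $q$ be a prime power, $q-1=ds$ with $d,s$ positive integers, let $r_0,\dots,r_{d-1}$ be positive integers, let $a_0,\dots,a_{d-1}\in\mathbb{F}_q^*$, let $\xi$ be a primitive element of $\mathbb{F}_q$ and $\omega=\xi^s$. Let $$f(x)=\frac{1}{d}\sum_{i=0}^{d-1}\sum_{j=0}^{d-1} a_i\,\omega^{-ij}\,x^{r_i+js}\in\mathbb{F}_q[x].$$ If $f$ is a permutation polynomial of $\mathbb{F}_q$, then its inverse over $\mathbb{F}_q$ is given by $$f^{-1}(x)=\frac{1}{d}\sum_{i=0}^{d-1}\sum_{j=0}^{d-1}\omega^{i(t_i-jr_i)}\left(\frac{x}{a_i}\right)^{\tilde r_i+js},$$ where $\tilde r_i,t_i\in\mathbb{Z}$ satisfy $1\le \tilde r_i<s$ and $r_i\tilde r_i+st_i=1$ (for each $i=0,\dots,d-1$).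
   Context: A polynomial $f\in\mathbb{F}_q[x]$ is a permutation polynomial of $\mathbb{F}_q$ if it induces a bijection of $\mathbb{F}_q$. A polynomial $g$ is the inverse of $f$ over $\mathbb{F}_q$ if $g(f(c))=c$ for all $c\in\mathbb{F}_q$ (equivalently $g(f(x))\equiv x\pmod{x^q-x}$). Since $d\mid q-1$, $d$ is invertible in $\mathbb{F}_q$, so $1/d$ makes sense. (The polynomial $f$ is the cyclotomic mapping with $f(0)=0$ and $f(x)=a_ix^{r_i}$ for $x\in\xi^i\langle\xi^d\rangle$.) *)

(* Defs.v *)
From HB Require Import structures.
From mathcomp Require Import all_boot all_order all_algebra all_field.
Set Implicit Arguments. Unset Strict Implicit. Unset Printing Implicit Defensive.
Import GRing.Theory.
Local Open Scope ring_scope.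

Definition is_perm_poly (F : finFieldType) (p : {poly F}) : Prop :=
  bijective (fun c : F => p.[c]).

Definition cyc_poly (F : fieldType) (d s : nat) (w : F)
    (a : 'I_d -> F) (r : 'I_d -> nat) : {poly F} :=
  (d%:R)^-1 *: \sum_(i < d) \sum_(j < d)
     (a i * w ^- (i * j)%N) *: 'X^(r i + j * s).

(* g(x) = 1/d * sum_i sum_j w^{i (t_i - j r_i)} (x / a_i)^{rt_i + j s},
   with (x/a_i)^e expanded as (a_i^-1)^e x^e; t_i is an integer. *)
Definition cyc_inv_poly (F : fieldType) (d s : nat) (w : F)
    (a : 'I_d -> F) (r rt : 'I_d -> nat) (t : 'I_d -> int) : {poly F} :=
  (d%:R)^-1 *: \sum_(i < d) \sum_(j < d)
     (w ^ ((i%:Z) * (t i - (j * r i)%N%:Z)) * (a i)^-1 ^+ (rt i + j * s))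
       *: 'X^(rt i + j * s).

(* Main.v *)
Require Import Defs.
From HB Require Import structures.
From mathcomp Require Import all_boot all_order all_algebra all_field.
From mathcomp Require Import ring.
Import GRing.Theory.
Local Open Scope ring_scope.

Lemma unit_pow (F : finFieldType) (x : F) : x != 0 -> x ^+ #|F|.-1 = 1.
Proof.
move=> x0; apply: (mulIf x0); rewrite mul1r -exprSr prednK ?expf_card //.
by apply/card_gt0P; exists 0.
Qed.

Lemma geo (F : fieldType) (d : nat) (u : F) :
  u ^+ d = 1 -> \sum_(j < d) u ^+ j = (u == 1)%:R * d%:R.
Proof.
case: eqP => [->|/eqP u1] ud.
  rewrite mul1r; under eq_bigr do rewrite expr1n.
  by rewrite sumr_const card_ord.
rewrite mul0r; have : (u - 1) * \sum_(j < d) u ^+ j = 0 by rewrite -subrX1 ud subrr.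
by move/eqP; rewrite mulf_eq0 subr_eq0 (negbTE u1) /= => /eqP.
Qed.

Lemma div_eq1 (F : fieldType) (x y : F) : y != 0 -> (x / y == 1) = (x == y).
Proof.
move=> y0; apply/eqP/eqP => [h|->]; last exact: divff.
by rewrite -(divfK y0 x) h mul1r.
Qed.

Theorem theorem3p3 (F : finFieldType) (d s : nat)
    (hd : (0 < d)%N) (hs : (0 < s)%N) (hq : #|F|.-1 = (d * s)%N)
    (r : 'I_d -> nat) (hr : forall i, (0 < r i)%N)
    (a : 'I_d -> F) (ha : forall i, a i != 0)
    (xi : F) (hxi : #|F|.-1.-primitive_root xi)
    (rt : 'I_d -> nat) (t : 'I_d -> int)
    (hrt : forall i, (1 <= rt i)%N /\ (rt i < s)%N)
    (hrt_t : forall i, (r i)%:Z * (rt i)%:Z + s%:Z * t i = 1)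
    (hperm : is_perm_poly (@cyc_poly F d s (xi ^+ s) a r)) :
  forall c : F,
    (@cyc_inv_poly F d s (xi ^+ s) a r rt t).[(@cyc_poly F d s (xi ^+ s) a r).[c]] = c.
Proof.
have inj := bij_inj hperm.
set w := xi ^+ s.
have wp : d.-primitive_root w.
  rewrite hq in hxi.
  have := dvdn_prim_root hxi (dvdn_mulr s (dvdnn d)).
  by rewrite mulKn.
have w0 : w != 0.
  by apply/eqP => w0; have := prim_expr_order wp; rewrite w0 expr0n gtn_eqF //= => /eqP; rewrite eq_sym oner_eq0.
have xs : forall x : F, x != 0 -> (x ^+ s) ^+ d = 1.
  by move=> x x0; rewrite -exprM mulnC -hq unit_pow.
have dnz : (d%:R : F) != 0.
  apply/eqP => d0; have := inj 0 1; rewrite /= /cyc_poly d0 invr0 !scale0r !horner0.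
  by move/(_ erefl)/eqP; rewrite eq_sym oner_eq0.
have wd : w ^+ d = 1 := prim_expr_order wp.
have wi : forall n, w ^+ n != 0 by move=> n; exact: expf_neq0.
have eqw : forall i j : 'I_d, (w ^+ i == w ^+ j) = (i == j).
  by move=> i j; rewrite (eq_prim_root_expr wp) !modn_small.
have Ff : forall (c : F) (l : 'I_d), c ^+ s = w ^+ l ->
    (cyc_poly s w a r).[c] = a l * c ^+ r l.
  move=> c l cl; rewrite /cyc_poly hornerZ horner_sum.
  rewrite (eq_bigr (fun i : 'I_d => a i * c ^+ r i * ((w ^+ l / w ^+ i == 1)%:R * d%:R))); last first.
    move=> i _; rewrite horner_sum -geo; last first.
      by rewrite exprMn exprVn -!exprM !(mulnC _ d) !exprM wd !expr1n invr1 mulr1.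
    rewrite mulr_sumr; apply: eq_bigr => j _; rewrite hornerZ hornerXn.
    rewrite exprD (mulnC j s) (exprM c) cl exprMn exprVn -!exprM (mulnC l j) (mulnC i j).
    by ring.
  rewrite (bigD1 l) //= big1 ?addr0; last first.
    by move=> i il; rewrite div_eq1 ?wi //  (eqw l i) eq_sym (negbTE il) mul0r mulr0.
  by rewrite divff ?wi // eqxx mul1r mulrC mulfK.
move=> c; case: (eqVneq c 0) => [->|c0].
  have -> : (cyc_poly s w a r).[0] = 0.
    rewrite /cyc_poly hornerZ horner_sum big1 ?mulr0 // => i _.
    rewrite horner_sum big1 // => j _.
    by rewrite hornerZ hornerXn expr0n /= addn_eq0 (negbTE (lt0n_neq0 (hr i))) mulr0.
  rewrite /cyc_inv_poly hornerZ horner_sum big1 ?mulr0 // => i _.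
  rewrite horner_sum big1 // => j _.
  by rewrite hornerZ hornerXn expr0n /= addn_eq0 (negbTE (lt0n_neq0 (hrt i).1)) mulr0.
have [l cl] := prim_rootP wp (xs c c0).
rewrite (Ff c l cl).
set y := a l * c ^+ r l.
have y0 : y != 0 by rewrite mulf_neq0 ?expf_neq0.
pose v (i : 'I_d) := (a i)^-1 * y.
have v0 : forall i, v i != 0 by move=> i; rewrite mulf_neq0 ?invr_eq0.
pose z (i : 'I_d) := w ^ (i%:Z * t i) * v i ^+ rt i.
rewrite /cyc_inv_poly hornerZ horner_sum.
rewrite (eq_bigr (fun i : 'I_d => z i * ((v i ^+ s / w ^+ (i * r i) == 1)%:R * d%:R))); last first.
  move=> i _; rewrite horner_sum -geo; last first.
    by rewrite exprMn exprVn xs // -!exprM !(mulnC _ d) !exprM wd !expr1n invr1 mulr1.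
  rewrite mulr_sumr; apply: eq_bigr => j _; rewrite hornerZ hornerXn.
  rewrite mulrBr expfzDr // -PoszM -exprnN (mulnCA i j) (mulnC j (i * r i)%N).
  rewrite !exprD (mulnC j s) !exprM /z /v !exprMn !exprVn.
  by ring.
have K : forall i, (v i ^+ s / w ^+ (i * r i) == 1) -> z i = c /\ i = l.
  move=> i; rewrite div_eq1 // => /eqP vs.
  have zs : z i ^+ s = w ^+ i.
    rewrite /z exprMn -(exprM (v i)) mulnC (exprM (v i)) vs -(exprM w).
    rewrite -[(w ^ _) ^+ s]/((w ^ (i%:Z * t i)) ^ s%:Z) exprz_exp.
    rewrite -[w ^+ (i * r i * rt i)]/(w ^ ((i * r i * rt i)%N%:Z)) -expfzDr //.
    have -> : i%:Z * t i * s%:Z + (i * r i * rt i)%N%:Z = i%:Z.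
      by rewrite !PoszM -[X in _ = X]mulr1 -(hrt_t i); ring.
    by [].
  have e1 : v i ^+ (rt i * r i) = v i * w ^ (-((i * r i)%N%:Z * t i)).
    rewrite -[v i ^+ (rt i * r i)]/(v i ^ ((rt i * r i)%N%:Z)).
    have -> : ((rt i * r i)%N%:Z) = 1 + (s%:Z * - t i).
      by rewrite PoszM -(hrt_t i); ring.
    rewrite expfzDr // expr1z -exprz_exp.
    rewrite -[v i ^ s%:Z]/(v i ^+ s) vs.
    by rewrite -[w ^+ (i * r i)]/(w ^ ((i * r i)%N%:Z)) exprz_exp mulrN.
  have zr : z i ^+ r i = v i.
    rewrite /z exprMn -exprM e1.
    rewrite -[(w ^ _) ^+ r i]/((w ^ (i%:Z * t i)) ^ (r i)%:Z) exprz_exp mulrCA -expfzDr //.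
    have -> : i%:Z * t i * (r i)%:Z + - ((i * r i)%N%:Z * t i) = 0.
      by rewrite PoszM; ring.
    by rewrite expr0z mulr1.
  have fz : (cyc_poly s w a r).[z i] = y by rewrite (Ff _ i zs) zr /v mulVKf.
  have zc : z i = c by apply: inj; rewrite /= fz (Ff c l cl).
  split => //; apply/eqP; rewrite -eqw -zs zc cl.
  done.
rewrite (bigD1 l) //= big1 ?addr0; last first.
  move=> i il; have [/K [_ il']|h] := boolP (v i ^+ s / w ^+ (i * r i) == 1).
    by rewrite il' eqxx in il.
  by rewrite mul0r mulr0.
have hl : v l ^+ s / w ^+ (l * r l) == 1.
  by rewrite div_eq1 // /v /y mulKf // -exprM mulnC exprM cl -exprM.
by rewrite hl mul1r mulrC mulfK // (K l hl).1.
Qed.
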